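(* Let $x$ be a Sturmian word. For every integer $k>1$ and every position $j$ of $x$, there is a factor of $x$ starting at position $j$ that is a $k$-anti-power.
   Context: A Sturmian word is an infinite word having exactly $n+1$ distinct factors of length $n$ for every $n\in\mathbb{N}$. A factor is a contiguous subword. A $k$-anti-power is a word $w=w_1\cdots w_k$ with $|w_1|=\cdots=|w_k|\ge1$ and $w_1,\dots,w_k$ pairwise distinct. *)

(* Defs.v *)
From mathcomp Require Import all_boot.
Set Implicit Arguments. Unset Strict Implicit. Unset Printing Implicit Defensive.

Definition infword (T : Type) := nat -> T.

Definition factor (T : Type) (x : infword T) (i n : nat) : seq T :=
  mkseq (fun k => x (i + k)) n.

Definition is_factor_of_length (T : Type) (x : infword T) (n : nat) (w : seq T) : Prop :=
  exists i, w = factor x i n.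

Definition has_n_factors (T : eqType) (x : infword T) (n c : nat) : Prop :=
  exists s : seq (seq T),
    [/\ uniq s, size s = c &
        forall w, w \in s <-> is_factor_of_length x n w].

Definition sturmian (T : eqType) (x : infword T) : Prop :=
  forall n : nat, has_n_factors x n n.+1.

(* w = w_1 ... w_k with |w_1| = ... = |w_k| = m >= 1 and the w_i pairwise
   distinct; the i-th block (0-indexed) is take m (drop (i*m) w). *)
Definition anti_power (T : eqType) (k : nat) (w : seq T) : Prop :=
  exists m : nat,
    [/\ 0 < m, size w = k * m &
        uniq [seq take m (drop (i * m) w) | i <- iota 0 k]].

(* Main.v *)
Require Import Defs.
From mathcomp Require Import all_boot zify.
From Stdlib Require Import Classical Lia.
Set Implicit Arguments. Unset Strict Implicit. Unset Printing Implicit Defensive.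

Section Gen.
Variable T : eqType.
Implicit Types (y : infword T).

Lemma factorS y a n : factor y a n.+1 = rcons (factor y a n) (y (a+n)).
Proof. by rewrite /factor mkseqS. Qed.

Lemma factor_eqP y a b n :
  factor y a n = factor y b n <-> (forall i, i < n -> y (a+i) = y (b+i)).
Proof.
split.
  move=> E i Hi; have := congr1 (fun s => nth (y 0) s i) E.
  by rewrite /factor !nth_mkseq.
move=> H; apply: (@eq_from_nth _ (y 0)); first by rewrite !size_mkseq.
by move=> i; rewrite size_mkseq => Hi; rewrite !nth_mkseq // H.
Qed.

Lemma factor_cons y a n : factor y a n.+1 = y a :: factor y a.+1 n.
Proof.
apply: (@eq_from_nth _ (y 0)); first by rewrite /factor size_mkseq [RHS]/= size_mkseq.
rewrite /factor size_mkseq => -[|i] Hi.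
  by rewrite nth_mkseq // addn0.
by rewrite nth_mkseq //= nth_mkseq // addnS addSn.
Qed.

Lemma factor_prefix y a b n :
  factor y a n.+1 = factor y b n.+1 -> factor y a n = factor y b n.
Proof. by rewrite !factorS => /rcons_inj [->]. Qed.

Lemma factor_last y a b n :
  factor y a n.+1 = factor y b n.+1 -> y (a+n) = y (b+n).
Proof. by rewrite !factorS => /rcons_inj [_ ->]. Qed.

Lemma factor_tail y a b n :
  factor y a n.+1 = factor y b n.+1 -> factor y a.+1 n = factor y b.+1 n.
Proof. by rewrite !factor_cons => -[]. Qed.

Lemma step_eq y a b n :
  factor y a n = factor y b n -> y (a+n) = y (b+n) ->
  factor y a.+1 n = factor y b.+1 n.
Proof.
move=> E1 E2; apply: factor_tail; by rewrite !factorS E1 E2.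
Qed.

End Gen.

Lemma uniq_map_inj (A B : eqType) (f : A -> B) s a b :
  uniq (map f s) -> a \in s -> b \in s -> f a = f b -> a = b.
Proof.
elim: s => //= c s IH /andP[nin U]; rewrite !inE.
move=> /orP[/eqP->|As] /orP[/eqP->|Bs] E //.
- by move: nin; rewrite E map_f.
- by move: nin; rewrite -E map_f.
- exact: IH.
Qed.

Lemma uniq_map_equiv (A B C : eqType) (f : A -> B) (g : A -> C) s :
  (forall a b, f a = f b <-> g a = g b) -> uniq (map f s) = uniq (map g s).
Proof.
move=> H; elim: s => //= c s ->; congr andb; congr negb.
apply/mapP/mapP => -[d ds E]; exists d => //; exact/H.
Qed.

Definition SPw (T : eqType) (y : infword T) :=
  forall m, (forall ps, uniq (map (factor y ^~ m) ps) -> size ps <= m.+1) /\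
    exists ps, size ps = m.+1 /\ uniq (map (factor y ^~ m) ps).

Lemma SP_transfer (T1 T2 : eqType) (y1 : infword T1) (y2 : infword T2) :
  (forall i j, y1 i = y1 j <-> y2 i = y2 j) -> SPw y1 -> SPw y2.
Proof.
move=> H sp m.
have E : forall a b, factor y1 a m = factor y1 b m <-> factor y2 a m = factor y2 b m.
  move=> a b; rewrite !factor_eqP; split=> K i Hi; apply/H; exact: K.
have [sp1 [ps [sz U]]] := sp m; split.
  by move=> qs; rewrite -(uniq_map_equiv qs E); apply: sp1.
by exists ps; split=> //; rewrite -(uniq_map_equiv ps E).
Qed.

Lemma sturm_SP (T : eqType) (x : infword T) : sturmian x -> SPw x.
Proof.
move=> st m; have [s [U sz Hs]] := st m; split.
  move=> ps U'; rewrite -(size_map (factor x ^~ m)) -sz.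
  apply: uniq_leq_size => // w /mapP[i _ ->]; apply/Hs; by exists i.
have: forall s', {subset s' <= s} -> exists ps, map (factor x ^~ m) ps = s'.
  elim=> [|w s' IH] sub; first by exists [::].
  have [i Ei] := (Hs w).1 (sub w (mem_head _ _)).
  have [ps Eps] := IH (fun u us => sub u (@mem_behead _ (w :: s') u us)).
  by exists (i :: ps); rewrite /= Eps Ei.
move=> /(_ s (fun u h => h)) [ps Eps]; exists ps.
by split; [rewrite -sz -Eps size_map | rewrite Eps].
Qed.

Section SPfacts.
Variable T : eqType.
Variable y : infword T.
Hypothesis sp : SPw y.

Lemma SP_aper P d : 0 < d -> ~ (forall i, P <= i -> y (i + d) = y i).
Proof.
move=> d0 per.
have [sp1 [ps [sz U]]] := sp (P + d).
pose r a := if a < P then a else P + (a - P) %% d.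
have perk : forall k i, P <= i -> y (i + k * d) = y i.
  elim=> [|k IH] i Hi; first by rewrite mul0n addn0.
  by rewrite mulSn addnCA addnC per ?IH // (leq_trans Hi) // leq_addr.
have Hr : forall a, factor y a (P + d) = factor y (r a) (P + d).
  move=> a; apply/factor_eqP => i Hi; rewrite /r; case: ltnP => // Ha.
  have -> : a + i = (P + (a - P) %% d + i) + (a - P) %/ d * d.
    have := divn_eq (a - P) d; lia.
  by rewrite perk // -addnA leq_addr.
have E : map (factor y ^~ (P + d)) ps = map (factor y ^~ (P + d)) (map r ps).
  by rewrite -map_comp; apply: eq_map => a /=; rewrite Hr.
rewrite E in U; have U2 := map_uniq U.
have : size (map r ps) <= size (iota 0 (P + d)).
  apply: uniq_leq_size => // b /mapP[a _ ->]; rewrite mem_iota add0n /r.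
  case: ltnP => Ha; first by rewrite (leq_trans Ha) // leq_addr.
  by rewrite ltn_add2l ltn_pmod.
by rewrite size_map size_iota sz ltnn.
Qed.

Lemma SP_RS N n : exists a b,
  [/\ N <= a, N <= b, factor y a n = factor y b n & y (a + n) != y (b + n)].
Proof.
apply: NNPP => H.
have H' : forall a b, N <= a -> N <= b -> factor y a n = factor y b n ->
    y (a + n) = y (b + n).
  move=> a b Ha Hb E; apply/eqP; apply/negPn/negP => ne; apply: H.
  by exists a, b.
have [sp1 _] := sp n.
have NU : ~~ uniq (map (factor y ^~ n) (iota N n.+2)).
  by apply/negP => /sp1; rewrite size_iota ltnn.
have [i [j [ij jsz Eij]]] := uniqPn [::] NU.
rewrite size_map size_iota in jsz.
rewrite !(nth_map 0) ?size_iota ?(ltn_trans ij) // !nth_iota ?(ltn_trans ij) // in Eij.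
have Ht : forall t, factor y (N + i + t) n = factor y (N + j + t) n.
  elim=> [|t IH]; first by rewrite !addn0.
  rewrite !addnS; apply: step_eq => //; apply: H' => //.
    by rewrite -addnA leq_addr.
  by rewrite -addnA leq_addr.
apply: (@SP_aper (N + i + n) (j - i)); first by rewrite subn_gt0.
move=> k Hk.
have [t ->] : exists t, k = N + i + n + t by exists (k - (N + i + n)); rewrite subnKC.
have := H' _ _ (leq_trans (leq_addr _ _) (leq_addr t _)) (leq_trans (leq_addr _ _) (leq_addr t _)) (Ht t).
have -> : N + i + n + t + (j - i) = N + j + t + n by lia.
have -> : N + i + n + t = N + i + t + n by lia.
by move=> ->.
Qed.

Lemma SP_rep m ps : size ps = m.+1 -> uniq (map (factor y ^~ m) ps) ->
  forall a, exists2 c, c \in ps & factor y c m = factor y a m.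
Proof.
move=> sz U a; apply: NNPP => H.
have [sp1 _] := sp m.
have : uniq (map (factor y ^~ m) (a :: ps)).
  rewrite /= U andbT; apply/mapP => -[c cs E]; apply: H; by exists c.
by move/sp1; rewrite /= sz ltnn.
Qed.

Lemma SP_uRS n a a' b b' :
  factor y a n = factor y a' n -> y (a + n) != y (a' + n) ->
  factor y b n = factor y b' n -> y (b + n) != y (b' + n) ->
  factor y a n = factor y b n.
Proof.
move=> Ea Na Eb Nb; apply: NNPP => Fab.
have [_ [ps [sz U]]] := sp n.
have [ca ca_in Eca] := SP_rep sz U a.
have [cb cb_in Ecb] := SP_rep sz U b.
pose as_ := if y (ca + n) != y (a + n) then a else a'.
pose bs := if y (cb + n) != y (b + n) then b else b'.
have Fas : factor y as_ n = factor y a n by rewrite /as_; case: ifP => // _; rewrite Ea.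
have Fbs : factor y bs n = factor y b n by rewrite /bs; case: ifP => // _; rewrite Eb.
have Las : y (ca + n) != y (as_ + n).
  by rewrite /as_; case: ifP => [//|/negbFE/eqP E]; rewrite E.
have Lbs : y (cb + n) != y (bs + n).
  by rewrite /bs; case: ifP => [//|/negbFE/eqP E]; rewrite E.
have inj : {in ps &, injective (factor y ^~ n)}.
  by move=> u v us vs; apply: uniq_map_inj U us vs.
have [sp1 _] := sp n.+1.
pose F := factor y ^~ n.+1.
have U1 : uniq (map F ps).
  rewrite map_inj_in_uniq ?(map_uniq U) // => u v us vs /factor_prefix; exact: inj.
have Nas : F as_ \notin map F ps.
  apply/mapP => -[c cs E].
  have := factor_prefix E; rewrite Fas -Eca => /(inj _ _ ca_in cs) Ec; subst c.
  by move: Las; rewrite (factor_last E) eqxx.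
have Nbs : F bs \notin map F ps.
  apply/mapP => -[c cs E].
  have := factor_prefix E; rewrite Fbs -Ecb => /(inj _ _ cb_in cs) Ec; subst c.
  by move: Lbs; rewrite (factor_last E) eqxx.
have Nab : F as_ != F bs.
  by apply/eqP => /factor_prefix; rewrite Fas Fbs.
have : uniq (map F (ps ++ [:: as_; bs])).
  rewrite map_cat cat_uniq U1 /= orbF negb_or Nas Nbs /= inE Nab. done.
by move/sp1; rewrite size_cat sz /= !addnS addn0 ltnn.
Qed.

Lemma SP_LB N M : exists ps,
  [/\ size ps = M.+1, all (fun i => N <= i) ps & uniq (map (factor y ^~ M) ps)].
Proof.
elim: M => [|M [ps [sz al U]]]; first by exists [:: N]; rewrite /= leqnn.
have [a [b [Na Nb Eab Lab]]] := SP_RS N M.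
have inj : {in ps &, injective (factor y ^~ M)}.
  by move=> u v us vs; apply: uniq_map_inj U us vs.
pose F := factor y ^~ M.+1.
have U1 : uniq (map F ps).
  rewrite map_inj_in_uniq ?(map_uniq U) // => u v us vs /factor_prefix; exact: inj.
case: (boolP (has (fun c => factor y c M == factor y a M) ps)).
  move=> /hasP [c cs /eqP Ec].
  pose e := if y (c + M) != y (a + M) then a else b.
  have Fe : factor y e M = factor y a M by rewrite /e; case: ifP => // _; rewrite Eab.
  have Le : y (c + M) != y (e + M).
    by rewrite /e; case: ifP => [//|/negbFE/eqP E]; rewrite E.
  exists (e :: ps); split.
  - by rewrite /= sz.
  - by rewrite /= al andbT /e; case: ifP.
  rewrite map_cons cons_uniq U1 andbT; apply/mapP => -[c' cs' E].
  have := factor_prefix E; rewrite Fe -Ec => /(inj _ _ cs cs') Ec'; subst c'.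
  by move: Le; rewrite (factor_last E) eqxx.
move=> /hasPn Hn; exists (a :: ps); split.
- by rewrite /= sz.
- by rewrite /= al Na.
rewrite map_cons cons_uniq U1 andbT; apply/mapP => -[c' cs' E].
by move: (Hn c' cs'); rewrite (factor_prefix E) eqxx.
Qed.

Lemma SP_rec a n N : exists2 b, N <= b & factor y b n = factor y a n.
Proof.
apply: NNPP => H.
have [ps [sz al U]] := SP_LB N n.
have [sp1 _] := sp n.
have : uniq (map (factor y ^~ n) (a :: ps)).
  rewrite map_cons cons_uniq U andbT; apply/mapP => -[c cs E].
  apply: H; exists c; last by [].
  exact: (allP al c cs).
by move/sp1; rewrite /= sz ltnn.
Qed.

End SPfacts.

Fixpoint sumto (f : nat -> nat) M := if M is M'.+1 then sumto f M' + f M' else 0.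
Definition cnt (z : nat -> bool) a L := sumto (fun i => nat_of_bool (z (a + i))) L.

Lemma sumto_add f M1 M2 :
  sumto f (M1 + M2) = sumto f M1 + sumto (fun i => f (M1 + i)) M2.
Proof. elim: M2 => [|M IH] /=; first by rewrite !addn0. by rewrite addnS /= IH addnA. Qed.

Lemma eq_sumto f g M : (forall i, i < M -> f i = g i) -> sumto f M = sumto g M.
Proof.
elim: M => [|M IH] H //=; rewrite IH ?H // => i Hi; apply: H; exact: ltnW.
Qed.

Lemma cntS z a L : cnt z a L.+1 = cnt z a L + z (a + L).
Proof. by []. Qed.

Lemma cnt_add z a L1 L2 : cnt z a (L1 + L2) = cnt z a L1 + cnt z (a + L1) L2.
Proof.
rewrite /cnt sumto_add; congr addn; apply: eq_sumto => i _; by rewrite addnA.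
Qed.

Lemma cnt_ext z a b L : (forall i, i < L -> z (a + i) = z (b + i)) ->
  cnt z a L = cnt z b L.
Proof. move=> H; apply: eq_sumto => i Hi; by rewrite H. Qed.

Lemma cnt_le z a L : cnt z a L <= L.
Proof. elim: L => //= L IH; rewrite cntS -[L.+1]addn1 leq_add //; by case: (z _). Qed.

Lemma cnt1 z a : cnt z a 1 = z a.
Proof. by rewrite /cnt /= addn0. Qed.

Lemma cnt_fac z a b L : factor z a L = factor z b L -> cnt z a L = cnt z b L.
Proof. by move/factor_eqP; apply: cnt_ext. Qed.

Section Core.
Variable z : nat -> bool.
Hypothesis spz : SPw z.

Lemma core (b : bool) n p q e :
  z p = b -> z (p + n.+1) = b -> z q = ~~ b -> z (q + n.+1) = ~~ b ->
  (forall i, i < n -> z (p.+1 + i) = z (q.+1 + i)) ->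
  cnt z p n.+2 != cnt z q n.+2 ->
  factor z e n.+1 = factor z q n.+1 -> z (e + n.+1) = b -> False.
Proof.
move=> zp zpn zq zqn mid cntne Ee ze.
pose r := factor z q n.+1.
have h0 : factor z q n.+1 != factor z p n.+1.
  by rewrite !factor_cons; apply/eqP => -[]; rewrite zp zq; case: (b).
have Ne : z (e + n.+1) != z (q + n.+1) by rewrite ze zqn; case: (b).
have h1 : forall f, factor z f n.+1 = factor z p n.+1 -> z (f + n.+1) = b.
  move=> f Ef; apply/eqP; apply/negPn/negP => Nf.
  have Nf' : z (f + n.+1) != z (p + n.+1) by rewrite zpn.
  have := SP_uRS spz Ef Nf' Ee Ne; rewrite Ef Ee => E.
  by move: h0; rewrite E eqxx.
have h2 : forall f f', factor z f n.+1 = factor z f' n.+1 -> factor z f n.+1 != r ->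
    z (f + n.+1) = z (f' + n.+1).
  move=> f f' Ef Nr; apply/eqP; apply/negPn/negP => Nf.
  have := SP_uRS spz Ef Nf Ee Ne; rewrite Ee => E.
  by move: Nr; rewrite E eqxx.
have prop : forall a a' S, factor z a n.+1 = factor z a' n.+1 ->
    (forall s, s < S -> factor z (a + s) n.+1 != r) ->
    factor z (a + S) n.+1 = factor z (a' + S) n.+1.
  move=> a a' S E; elim: S => [|S IH] H; first by rewrite !addn0.
  have IH' := IH (fun s Hs => H s (ltnW Hs)).
  rewrite !addnS; apply: step_eq => //; apply: h2 => //; exact: H.
have exT : exists T, (0 < T) && (factor z (q + T) n.+1 == r).
  have [b0 Hb0 Eb0] := SP_rec spz q n.+1 q.+1.
  exists (b0 - q); rewrite subn_gt0 Hb0 /= subnKC ?Eb0 //; exact: ltnW.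
case: (ex_minnP exT) => T /andP[T0 /eqP ET] Tmin.
have minT : forall i, 0 < i -> i < T -> factor z (q + i) n.+1 != r.
  move=> i i0 iT; apply/eqP => E.
  by have := Tmin i; rewrite i0 E eqxx => /(_ isT); rewrite leqNgt iT.
have exT' : exists T', factor z (p.+1 + T') n.+1 == r.
  have [b0 Hb0 Eb0] := SP_rec spz q n.+1 p.+1.
  by exists (b0 - p.+1); rewrite subnKC ?Eb0.
case: (ex_minnP exT') => T' /eqP ET' T'min.
have minT' : forall s, s < T' -> factor z (p.+1 + s) n.+1 != r.
  move=> s sT; apply/eqP => E.
  by have := T'min s; rewrite E eqxx => /(_ isT); rewrite leqNgt sT.
have fromr : forall f, factor z f n.+1 = r ->
    factor z f.+1 n.+1 = factor z q.+1 n.+1 \/ factor z f.+1 n.+1 = factor z p.+1 n.+1.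
  move=> f Ef.
  case Hz: (z (f + n.+1) == ~~ b).
    left; apply: step_eq => //; by rewrite (eqP Hz) zqn.
  right; apply/factor_eqP => i Hi.
  have Hzf : z (f + n.+1) = b by move: Hz; case: (z _); case: (b).
  rewrite ltnS leq_eqVlt in Hi; case/orP: Hi => [/eqP ->|Hi].
    by rewrite addSnnS Hzf addSnnS zpn.
  have := (factor_eqP _ _ _ _).1 Ef i.+1 Hi.
  by rewrite -addSnnS => ->; rewrite mid // addSnnS.
have inv : forall d,
    (exists2 i, 0 < i <= T & factor z (q.+1 + d) n.+1 = factor z (q + i) n.+1) \/
    (exists2 s, s <= T' & factor z (q.+1 + d) n.+1 = factor z (p.+1 + s) n.+1).
  elim=> [|d IH].
    by left; exists 1; rewrite ?T0 // addn0 addn1.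
  have fromr' : factor z (q.+1 + d) n.+1 = r ->
     (exists2 i, 0 < i <= T & factor z (q.+1 + d.+1) n.+1 = factor z (q + i) n.+1) \/
     (exists2 s, s <= T' & factor z (q.+1 + d.+1) n.+1 = factor z (p.+1 + s) n.+1).
    move=> E; rewrite addnS; case: (fromr _ E) => E'.
      by left; exists 1; rewrite ?T0 // addn1.
    by right; exists 0; rewrite ?addn0.
  case: IH => [[i /andP[i0 iT] E]|[s sT E]].
    rewrite leq_eqVlt in iT; case/orP: iT => [/eqP Ei|iT].
      by apply: fromr'; rewrite E Ei.
    left; exists i.+1; first by rewrite iT.
    rewrite addnS addnS; apply: step_eq => //; apply: h2 => //.
    by rewrite E; apply: minT.
  rewrite leq_eqVlt in sT; case/orP: sT => [/eqP Es|sT].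
    by apply: fromr'; rewrite E Es.
  right; exists s.+1; first by [].
  rewrite addnS addnS; apply: step_eq => //; apply: h2 => //.
  by rewrite E; apply: minT'.
have no1wU : forall s, s <= T' -> factor z (p.+1 + s) n.+1 != factor z p n.+1.
  move=> s Hs; apply/eqP => E.
  have sT : s < T'.
    rewrite ltn_neqAle Hs andbT; apply/eqP => Es.
    by move: h0; rewrite -E Es ET' eqxx.
  have E1 : factor z (p.+1 + s).+1 n.+1 = factor z p.+1 n.+1.
    by apply: step_eq => //; rewrite (h1 _ E) zpn.
  have := prop _ _ (T' - s.+1) (esym E1) (fun s' Hs' => minT' s' (leq_trans Hs' (leq_subr _ _))).
  have -> : (p.+1 + s).+1 + (T' - s.+1) = p.+1 + T' by lia.
  rewrite ET' => E2.
  have : T' - s.+1 < T' by lia.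
  by move/minT'; rewrite E2 eqxx.
have [j0 /andP[j00 j0T] Ej0] : exists2 j0, 0 < j0 < T & factor z (q + j0) n.+1 = factor z p n.+1.
  have [b0 Hb0 Eb0] := SP_rec spz p n.+1 q.+1.
  have := inv (b0 - q.+1); rewrite subnKC // Eb0.
  case=> [[i /andP[i0 iT] Ei]|[s sT Es]]; last by move: (no1wU s sT); rewrite Es eqxx.
  exists i; last by rewrite Ei.
  rewrite i0 /= ltn_neqAle iT andbT; apply/eqP => Ei'.
  by move: h0; rewrite Ei Ei' ET eqxx.
have Ej : factor z (q + j0).+1 n.+1 = factor z p.+1 n.+1.
  by apply: step_eq => //; rewrite (h1 _ Ej0) zpn.
have propj : forall S, S <= T - j0.+1 ->
    factor z (q + j0.+1 + S) n.+1 = factor z (p.+1 + S) n.+1.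
  move=> S HS; apply: prop; first by rewrite addnS.
  move=> s Hs; rewrite -addnA; apply: minT; lia.
have T'le : T' <= T - j0.+1.
  apply: T'min; rewrite -propj //.
  have -> : q + j0.+1 + (T - j0.+1) = q + T by lia.
  by rewrite ET.
have allV : forall a, exists2 i, 0 < i <= T & factor z a n.+1 = factor z (q + i) n.+1.
  move=> a; have [b0 Hb0 Eb0] := SP_rec spz a n.+1 q.+1.
  have := inv (b0 - q.+1); rewrite subnKC // Eb0.
  case=> [//|[s sT Es]].
  exists (j0.+1 + s); first by apply/andP; split; lia.
  rewrite Es -propj ?addnA //; lia.
have distinct : forall i i', 0 < i -> i < i' -> i' <= T ->
    factor z (q + i) n.+1 != factor z (q + i') n.+1.
  move=> i i' i0 ii' i'T; apply/eqP => E.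
  have H : forall s, s < T - i' -> factor z (q + i + s) n.+1 != r.
    move=> s Hs; rewrite -addnA; apply: minT; lia.
  have := prop _ _ (T - i') E H.
  have -> : q + i' + (T - i') = q + T by lia.
  rewrite ET -addnA => E2.
  have : i + (T - i') < T by lia.
  by move/(minT _ (ltn_addr _ i0)); rewrite E2 eqxx.
have [sp1 [ps0 [sz0 U0]]] := spz n.+1.
have TE : T = n.+2.
  apply/eqP; rewrite eqn_leq; apply/andP; split.
    have := sp1 (map (addn q) (iota 1 T)); rewrite size_map size_iota; apply.
    rewrite -map_comp map_inj_in_uniq ?iota_uniq // => i i'.
    rewrite !mem_iota /= !add1n !ltnS => /andP[i0 iT] /andP[i'0 i'T] E.
    case: (ltngtP i i') => // ii'.
      by move: (distinct _ _ i0 ii' i'T); rewrite E eqxx.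
    by move: (distinct _ _ i'0 ii' iT); rewrite E eqxx.
  rewrite -sz0 -(size_map (factor z ^~ n.+1)) -(size_iota 1 T)
          -(size_map (fun i => factor z (q + i) n.+1)).
  apply: uniq_leq_size => // w /mapP[a _ ->].
  have [i /andP[i0 iT] Ei] := allV a.
  by rewrite Ei; apply: map_f; rewrite mem_iota add1n ltnS i0.
have per : forall i, i < n.+1 -> z (q + T + i) = z (q + i).
  by apply/factor_eqP; rewrite ET.
have C1 : cnt z (q + j0) n.+2 = cnt z p n.+2.
  by apply: cnt_fac; rewrite (factorS z (q + j0) n.+1) (factorS z p n.+1) Ej0 (h1 _ Ej0) zpn.
have C2 : cnt z (q + j0) n.+2 = cnt z q n.+2.
  have E1 := cnt_add z q j0 (T - j0).
  have E2 := cnt_add z (q + j0) (T - j0) j0.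
  have E3 : cnt z (q + j0 + (T - j0)) j0 = cnt z q j0.
    apply: cnt_ext => i Hi; rewrite -per; first by congr z; lia.
    lia.
  rewrite subnKC in E1; last by lia.
  rewrite subnK in E2; last by lia.
  rewrite E3 in E2.
  rewrite -TE; lia.
by move: cntne; rewrite -C1 C2 eqxx.
Qed.
End Core.

Lemma balanced (z : nat -> bool) : SPw z -> forall L a b, cnt z a L <= (cnt z b L).+1.
Proof.
move=> spz; elim/ltn_ind => L IH a b; rewrite leqNgt; apply/negP => H.
have mid : forall i, 0 < i < L -> cnt z a i = (cnt z b i).+1.
  move=> i /andP[i0 iL].
  have E1 := cnt_add z a i (L - i); have E2 := cnt_add z b i (L - i).
  rewrite subnKC in E1; last by lia.
  rewrite subnKC in E2; last by lia.
  have := IH (L - i) ltac:(lia) (a + i) (b + i).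
  have := IH i iL a b.
  lia.
case: L IH H mid => [|[|n]] IH H mid.
- by move: H; rewrite /cnt.
- by move: H; rewrite !cnt1; case: (z a); case: (z b).
have z1 := mid 1 isT; rewrite !cnt1 in z1.
have za : z a = true by move: z1; case: (z a); case: (z b).
have zb : z b = false by move: z1; case: (z a); case: (z b).
have m2 : forall i, i < n -> z (a.+1 + i) = z (b.+1 + i).
  move=> i Hi.
  have h1 := mid i.+1 ltac:(lia); have h2 := mid i.+2 ltac:(lia).
  rewrite (cntS z a i.+1) (cntS z b i.+1) h1 in h2.
  rewrite !addSnnS; move: h2; case: (z (a + i.+1)); case: (z (b + i.+1)) => //=; lia.
have hl := mid n.+1 ltac:(lia).
rewrite (cntS z a n.+1) (cntS z b n.+1) hl in H.
have zan : z (a + n.+1) = true by move: H; case: (z (a + n.+1)); case: (z (b + n.+1)) => //=; lia.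
have zbn : z (b + n.+1) = false by move: H; case: (z (a + n.+1)); case: (z (b + n.+1)) => //=; lia.
have cne : cnt z a n.+2 != cnt z b n.+2 by rewrite (cntS z a n.+1) (cntS z b n.+1) hl; lia.
have [c [c' [_ _ Ecc Ncc]]] := SP_RS spz 0 n.+1.
have Es := factor_tail Ecc.
have Ns : z (c.+1 + n) != z (c'.+1 + n) by rewrite !addSnnS.
have Ew : factor z b.+1 n = factor z a.+1 n.
  by apply/factor_eqP => i Hi; rewrite m2.
have Nw : z (b.+1 + n) != z (a.+1 + n) by rewrite !addSnnS zan zbn.
have Ecw := SP_uRS spz Es Ns Ew Nw.
case zc: (z c).
- have Eca : factor z c n.+1 = factor z a n.+1 by rewrite !factor_cons zc za Ecw Ew.
  have [e [Ee ze]] : exists e, factor z e n.+1 = factor z a n.+1 /\ z (e + n.+1) = false.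
    case zcn: (z (c + n.+1)); last by exists c.
    exists c'; split; first by rewrite -Ecc.
    by move: Ncc; rewrite zcn; case: (z _).
  apply: (@core z spz false n b a e) => //.
  + by move=> i Hi; rewrite m2.
  + by rewrite eq_sym.
- have Ecb : factor z c n.+1 = factor z b n.+1 by rewrite !factor_cons zc zb Ecw.
  have [e [Ee ze]] : exists e, factor z e n.+1 = factor z b n.+1 /\ z (e + n.+1) = true.
    case zcn: (z (c + n.+1)); first by exists c.
    exists c'; split; first by rewrite -Ecc.
    by move: Ncc; rewrite zcn; case: (z _).
  exact: (@core z spz true n a b e).
Qed.

From Stdlib Require Import Reals Lra.

Lemma ex_fl (v : R) : exists k : nat, (if Rlt_dec v (INR k + 1) then true else false).
Proof.
have [k Hk] := INR_unbounded v; exists k; case: Rlt_dec => // H; exfalso; lra.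
Qed.

Definition rfloor (v : R) : nat := ex_minn (ex_fl v).

Lemma rfloor_spec v : (0 <= v)%R -> (INR (rfloor v) <= v < INR (rfloor v) + 1)%R.
Proof.
move=> v0; rewrite /rfloor; case: ex_minnP => k.
case: Rlt_dec => // Hk _ Hmin; split => //.
case: k Hk Hmin => [|k] Hk Hmin; first by rewrite /=; lra.
rewrite S_INR; apply: Rnot_lt_le => H.
have := Hmin k; case: Rlt_dec => // _ /(_ isT); by rewrite ltnn.
Qed.

Lemma pigeon (f : nat -> nat) M : (forall i, (i <= M)%nat -> (f i < M)%nat) ->
  exists i j, (i < j <= M)%nat /\ f i = f j.
Proof.
move=> H.
have NU : ~~ uniq (map f (iota 0 M.+1)).
  apply/negP => U.
  have Hsub : {subset map f (iota 0 M.+1) <= iota 0 M}.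
    move=> w /mapP [i]; rewrite mem_iota => /andP[_ Hi] ->.
    by rewrite mem_iota /= add0n H.
  by have := uniq_leq_size U Hsub; rewrite size_map !size_iota ltnn.
have [i [j [ij jsz Eij]]] := uniqPn 0 NU.
rewrite size_map size_iota in jsz.
rewrite !(nth_map 0) ?size_iota ?(ltn_trans ij) // !nth_iota ?(ltn_trans ij) // !add0n in Eij.
by exists i, j; rewrite ij -ltnS jsz.
Qed.

Lemma le_div_r (x y L : R) : (0 < L)%R -> (x * L <= y)%R -> (x <= y / L)%R.
Proof.
move=> L0 H; apply: (Rmult_le_reg_r L) => //.
have -> : (y / L * L = y)%R by field; lra.
exact: H.
Qed.

Lemma Rabs_le_between (x a : R) : (Rabs x <= a)%R -> (- a <= x <= a)%R.
Proof. rewrite /Rabs; case: Rcase_abs => ? ?; lra. Qed.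

Lemma Rabs_lt_between (x a : R) : (Rabs x < a)%R -> (- a < x < a)%R.
Proof. rewrite /Rabs; case: Rcase_abs => ? ?; lra. Qed.

Definition F1 (z : nat -> bool) (alpha : R) :=
  forall p L, (Rabs (INR (cnt z p L) - INR L * alpha) <= 1)%R.

Lemma slope (z : nat -> bool) : (forall L a b, cnt z a L <= (cnt z b L).+1) ->
  exists alpha, F1 z alpha.
Proof.
move=> bal.
pose E := fun r => exists L, (0 < L)%nat /\ forall p, (r * INR L <= INR (cnt z p L))%R.
have bE : bound E.
  exists 1%R => r [L [L0 H]].
  have H1 := H 0%nat; have H2 := le_INR _ _ (leP (cnt_le z 0 L)).
  have L0' : (0 < INR L)%R by apply: lt_0_INR; apply/ltP.
  apply: (Rmult_le_reg_r (INR L)) => //; lra.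
have nE : exists r, E r.
  exists 0%R, 1%nat; split => // p; rewrite Rmult_0_l; apply: pos_INR.
have [alpha [ub lub]] := completeness E bE nE.
exists alpha => p L.
case: (posnP L) => [->|L0].
  by rewrite /cnt /= Rmult_0_l Rminus_0_r Rabs_R0; lra.
have L0' : (0 < INR L)%R by apply: lt_0_INR; apply/ltP.
set c := INR (cnt z p L).
have low : (c - 1 <= INR L * alpha)%R.
  have Er : E ((c - 1) / INR L)%R.
    exists L; split => // p'.
    have -> : ((c - 1) / INR L * INR L = c - 1)%R by field; lra.
    have := le_INR _ _ (leP (bal L p p')); rewrite S_INR /c; lra.
  have := ub _ Er => H.
  have := Rmult_le_compat_r (INR L) _ _ (Rlt_le _ _ L0') H.
  have -> : ((c - 1) / INR L * INR L = c - 1)%R by field; lra.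
  lra.
have up : (INR L * alpha <= c + 1)%R.
  have : (alpha <= (c + 1) / INR L)%R.
    apply: lub => r [n0 [n00 H]].
    apply: le_div_r => //.
    have n00' : (0 < INR n0)%R by apply: lt_0_INR; apply/ltP.
    have lowK : forall K a, (INR K * (r * INR n0) <= INR (cnt z a (K * n0)))%R.
      elim=> [|K IH] a; first by rewrite mul0n /cnt /= Rmult_0_l; lra.
      rewrite mulSn cnt_add plus_INR S_INR.
      have := IH (a + n0)%nat; have := H a; lra.
    have upK : forall K a, (cnt z a (K * L) <= K * (cnt z p L).+1)%nat.
      elim=> [|K IH] a; first by rewrite mul0n /cnt.
      rewrite mulSn cnt_add mulSn leq_add //; exact: bal.
    have h1 := lowK L 0%nat; have h2 := le_INR _ _ (leP (upK n0 0%nat)).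
    rewrite mulnC mult_INR S_INR -/c in h2.
    apply: (Rmult_le_reg_r (INR n0)) => //.
    have : (INR L * (r * INR n0) <= INR n0 * (c + 1))%R by lra.
    nra.
  move=> H; have := Rmult_le_compat_r (INR L) _ _ (Rlt_le _ _ L0') H.
  have -> : ((c + 1) / INR L * INR L = c + 1)%R by field; lra.
  lra.
apply: Rabs_le; lra.
Qed.

Lemma sumtoD f g M : sumto (fun i => f i + g i) M = sumto f M + sumto g M.
Proof. elim: M => //= M ->; lia. Qed.

Lemma sumto0 M : sumto (fun _ => 0) M = 0.
Proof. by elim: M => //= M ->. Qed.

Lemma sumto_const c M : sumto (fun _ => c) M = M * c.
Proof. elim: M => //= M ->; rewrite mulSn; lia. Qed.

Lemma sumto_le f c M : (forall s, s < M -> f s <= c) -> sumto f M <= M * c.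
Proof.
elim: M => //= M IH H; rewrite mulSnr; apply: leq_add.
  by apply: IH => s Hs; apply: H; exact: ltnW.
exact: H.
Qed.

Lemma sumto_ge f c M : (forall s, s < M -> c <= f s) -> M * c <= sumto f M.
Proof.
elim: M => //= M IH H; rewrite mulSnr; apply: leq_add.
  by apply: IH => s Hs; apply: H; exact: ltnW.
exact: H.
Qed.

Lemma sumto_mono f M1 M2 : M1 <= M2 -> sumto f M1 <= sumto f M2.
Proof. move=> /subnKC <-; rewrite sumto_add; exact: leq_addr. Qed.

Lemma exch z M t : sumto (fun q => cnt z q t) M = sumto (fun s => cnt z s M) t.
Proof.
elim: t => [|t IH] /=; first exact: sumto0.
rewrite -IH -sumtoD; apply: eq_sumto => q _.
by rewrite cntS (addnC t q).
Qed.

Lemma ev_zero (e : nat -> nat) B : (forall M, sumto e M <= B) ->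
  exists P, forall q, P <= q -> e q = 0.
Proof.
move=> H; apply: NNPP => N.
have N' : forall P, exists2 q, P <= q & 0 < e q.
  move=> P; apply: NNPP => N2; apply: N; exists P => q Pq.
  apply/eqP; rewrite -leqn0 leqNgt; apply/negP => eq0; apply: N2; by exists q.
have grow : forall j, exists M, j <= sumto e M.
  elim=> [|j [M HM]]; first by exists 0.
  have [q Mq eq0] := N' M.
  exists q.+1 => /=.
  have := sumto_mono e Mq; lia.
have [M HM] := grow B.+1.
by have := H M; rewrite leqNgt (leq_trans _ HM).
Qed.

Definition aper (z : nat -> bool) := forall P d, 0 < d -> ~ (forall i, P <= i -> z (i + d) = z i).

Lemma irr (z : nat -> bool) alpha : aper z ->
  (forall L a b, cnt z a L <= (cnt z b L).+1) -> F1 z alpha ->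
  forall t N, 0 < t -> (INR t * alpha <> INR N)%R.
Proof.
move=> ap bal f1 t N t0 E.
have I1 : INR 1 = 1%R by [].
have b1 : forall p, cnt z p t <= N.+1 /\ N <= (cnt z p t).+1.
  move=> p; have := f1 p t; rewrite E => /Rabs_le_between [h1 h2].
  split; apply/leP; apply: INR_le; rewrite ?S_INR; lra.
have bK : forall p K, cnt z p (K * t) <= K * N + 1 /\ K * N <= cnt z p (K * t) + 1.
  move=> p K; have := f1 p (K * t); rewrite mult_INR Rmult_assoc E.
  move=> /Rabs_le_between [h1 h2].
  split; apply/leP; apply: INR_le; rewrite ?plus_INR ?mult_INR; lra.
have fin : exists P, forall q, P <= q -> cnt z q t = N.
  case: (classic (exists p0, cnt z p0 t < N)) => [[p0 Hp0]|Hn].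
  - have le : forall q, cnt z q t <= N.
      move=> q; have := bal t q p0; lia.
    have Hs : forall M, sumto (fun q => N - cnt z q t) M <= t.
      move=> M; apply: (@leq_trans (sumto (fun q => N - cnt z q t) (M * t))).
        apply: sumto_mono; rewrite leq_pmulr //.
      have e1 : sumto (fun q => N - cnt z q t) (M * t) + sumto (fun q => cnt z q t) (M * t)
          = (M * t) * N.
        rewrite -sumtoD -(sumto_const N (M * t)); apply: eq_sumto => q _; have := le q; lia.
      have e2 : t * (M * N) <= sumto (fun s => cnt z s (M * t)) t + t.
        have := sumto_ge (f := fun s => cnt z s (M * t) + 1) (c := M * N) (M := t).
        rewrite sumtoD sumto_const muln1; apply => s _; have := bK s M; lia.
      rewrite -exch in e2. 
      have : t * (M * N) = M * t * N by rewrite mulnCA mulnA.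
      lia.
    have [P HP] := ev_zero Hs.
    exists P => q Pq; have := HP q Pq; have := le q; lia.
  - have ge : forall q, N <= cnt z q t.
      move=> q; apply: NNPP => H; apply: Hn; exists q; lia.
    have Hs : forall M, sumto (fun q => cnt z q t - N) M <= t.
      move=> M; apply: (@leq_trans (sumto (fun q => cnt z q t - N) (M * t))).
        apply: sumto_mono; rewrite leq_pmulr //.
      have e1 : sumto (fun q => cnt z q t - N) (M * t) + (M * t) * N
          = sumto (fun q => cnt z q t) (M * t).
        rewrite -(sumto_const N (M * t)) -sumtoD; apply: eq_sumto => q _; have := ge q; lia.
      have e2 : sumto (fun s => cnt z s (M * t)) t <= t * (M * N + 1).
        apply: sumto_le => s _; have := bK s M; lia.
      rewrite -exch in e2.
      have : t * (M * N + 1) = M * t * N + t by rewrite mulnDr muln1 mulnCA mulnA.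
      lia.
    have [P HP] := ev_zero Hs.
    exists P => q Pq; have := HP q Pq; have := ge q; lia.
have [P HP] := fin.
apply: (ap P t t0) => i Pi.
have h1 := cnt_add z i 1 t.
have h2 := cntS z i t.
rewrite HP // in h2; rewrite add1n HP ?h2 in h1; last by rewrite addn1 (leq_trans Pi).
rewrite cnt1 in h1.
by move: h1; rewrite addnC; case: (z i); case: (z (i + t)) => //=; lia.
Qed.

Definition gfun (z : nat -> bool) (alpha : R) (n : nat) : R :=
  (INR (cnt z 0 n) - INR n * alpha)%R.

Lemma gdiff z alpha a L :
  (gfun z alpha (a + L) - gfun z alpha a = INR (cnt z a L) - INR L * alpha)%R.
Proof. rewrite /gfun cnt_add add0n !plus_INR; ring. Qed.

Lemma gF z alpha : F1 z alpha -> forall a b, (Rabs (gfun z alpha a - gfun z alpha b) <= 1)%R.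
Proof.
move=> f1 a b; case: (leqP a b) => ab.
  rewrite -(subnKC ab) Rabs_minus_sym gdiff; exact: f1.
rewrite -(subnKC (ltnW ab)) gdiff; exact: f1.
Qed.

Lemma dirichlet z alpha : F1 z alpha -> forall eps, (0 < eps)%R ->
  exists t c, [/\ (0 < t)%nat, (c <= t)%nat & (Rabs (INR t * alpha - INR c) < eps)%R].
Proof.
move=> f1 eps e0.
have [M HM] := INR_unbounded (/ eps).
have ie0 : (0 < / eps)%R by apply: Rinv_0_lt_compat.
have M0 : (0 < INR M)%R by lra.
have Meps : (1 < INR M * eps)%R.
  have := Rmult_lt_compat_r eps _ _ e0 HM; rewrite Rinv_l //; lra.
pose g := gfun z alpha.
pose v i := ((g i - g 0%nat + 1) * INR M)%R.
have vb : forall i, (0 <= v i <= 2 * INR M)%R.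
  move=> i; have := Rabs_le_between (gF f1 i 0%nat); rewrite /v -/g => -[h1 h2]; split; nra.
pose f i := rfloor (v i).
have fb : forall i, (i <= (M + M).+1)%nat -> (f i < (M + M).+1)%nat.
  move=> i _; have [h1 h2] := rfloor_spec (proj1 (vb i)).
  apply/ltP; apply: INR_lt; rewrite /f S_INR plus_INR; have := vb i; lra.
have [i [j [/andP[ij jM] Eij]]] := pigeon fb.
have [hi1 hi2] := rfloor_spec (proj1 (vb i)).
have [hj1 hj2] := rfloor_spec (proj1 (vb j)).
rewrite -/(f i) Eij in hi1 hi2; rewrite -/(f j) in hj1 hj2.
have d1 : (- 1 < (g j - g i) * INR M < 1)%R by rewrite /v in hi1 hi2 hj1 hj2; split; nra.
have d2 : (- eps < g j - g i < eps)%R.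
  split; apply: Rnot_le_lt => H; nra.
exists (j - i)%nat, (cnt z i (j - i)); split.
- by rewrite subn_gt0.
- exact: cnt_le.
have := gdiff z alpha i (j - i); rewrite subnKC ?(ltnW ij) // -/g => E.
apply: Rabs_def1; lra.
Qed.

Lemma hit (th w L0 : R) (j0 : nat) : (0 < th)%R -> (th < w)%R -> (INR j0 * th < L0)%R ->
  exists j, (j0 < j)%nat /\ (L0 <= INR j * th < L0 + w)%R.
Proof.
move=> th0 thw Hj0.
have ex : exists j, (if Rle_dec L0 (INR j * th) then true else false).
  have [n Hn] := INR_unbounded (L0 / th); exists n; case: Rle_dec => // H; exfalso.
  apply: H; have := Rmult_lt_compat_r th _ _ th0 Hn.
  have -> : (L0 / th * th = L0)%R by field; lra.
  lra.
case: (ex_minnP ex) => j; case: Rle_dec => // Hj _ Hmin.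
have jj0 : (j0 < j)%nat.
  rewrite ltnNge; apply/negP => H.
  have := le_INR _ _ (leP H) => H'; nra.
exists j; split => //; split => //.
case: j jj0 Hj Hmin => // j' _ Hj Hmin.
have Hj' : (INR j' * th < L0)%R.
  apply: Rnot_le_lt => H; have := Hmin j'; case: Rle_dec => // _ /(_ isT).
  by rewrite ltnn.
rewrite S_INR; lra.
Qed.

Lemma Rabs_ge (x e : R) : (e <= x \/ x <= - e)%R -> (0 <= e)%R -> (e <= Rabs x)%R.
Proof. rewrite /Rabs; case: Rcase_abs => ? [?|?] ?; lra. Qed.

Lemma finalA z alpha k t c : F1 z alpha -> (1 < k)%nat -> (0 < t)%nat ->
  (INR c < INR t * alpha < INR c + / (2 * INR k))%R ->
  exists m, (0 < m)%nat /\ forall j a b, (a < b < k)%nat ->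
    exists2 i, (i < m)%nat & z (j + a * m + i) != z (j + b * m + i).
Proof.
move=> f1 k1 t0 [Hc1 Hc2].
have k0 : (2 <= INR k)%R.
  have := le_INR _ _ (leP k1); rewrite /=; lra.
set eps := (/ (2 * INR k))%R.
have e0 : (0 < eps)%R by apply: Rinv_0_lt_compat; lra.
have ek : (2 * INR k * eps = 1)%R by rewrite /eps Rinv_r //; lra.
set th := (INR t * alpha - INR c)%R.
have th0 : (0 < th)%R by rewrite /th; lra.
have the : (th < eps)%R by rewrite /th /eps; lra.
have Hc2' : (INR t * alpha < INR c + eps)%R by [].
have epsl1 : (eps < 1)%R by nra.
have [K HK] := INR_unbounded (/ th).
have Kth : (1 < INR K * th)%R.
  have := Rmult_lt_compat_r th _ _ th0 HK; rewrite Rinv_l //; lra.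
have [n0 Hn0] := INR_unbounded (INR K * th).
have [j' [Kj' [hj1 hj2]]] := hit th0 the (ltac:(lra) : (INR K * th < INR n0 + eps)%R).
set m := (j' * t)%nat.
have m0 : (0 < m)%nat by rewrite /m muln_gt0 t0 andbT; lia.
have Km : (K * t <= m)%nat by rewrite /m leq_mul2r ltnW ?orbT.
set N := (j' * c + n0)%nat.
set dl := (INR m * alpha - INR N)%R.
have dlE : (eps <= dl < 2 * eps)%R.
  have -> : dl = (INR j' * th - INR n0)%R.
    rewrite /dl /th /m /N mult_INR plus_INR mult_INR; ring.
  lra.
have dist : forall c' S, (0 < c')%nat -> (c' < k)%nat ->
    (eps <= Rabs (INR S - INR (c' * m) * alpha))%R.
  move=> c' S c'0 c'k.
  have c'1 : (1 <= INR c')%R by have := le_INR _ _ (leP c'0); rewrite /=; lra.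
  have c'k' : (INR c' + 1 <= INR k)%R by have := le_INR _ _ (leP c'k); rewrite S_INR; lra.
  have -> : (INR (c' * m) * alpha = INR c' * INR N + INR c' * dl)%R.
    rewrite /dl mult_INR; ring.
  apply: Rabs_ge; last lra.
  case: (leqP S (c' * N)) => HS.
    have := le_INR _ _ (leP HS); rewrite mult_INR => H.
    right; nra.
  have := le_INR _ _ (leP HS); rewrite S_INR mult_INR => H.
  left; nra.
exists m; split => // j a b /andP[ab bk].
apply: NNPP => Hn.
have Heq : forall i, (i < m)%nat -> z (j + a * m + i) = z (j + b * m + i).
  move=> i im; apply/eqP; apply: NNPP => H; apply: Hn; exists i => //; exact/negP.
set p := (j + a * m)%nat.
set d := ((b - a) * m)%nat.
have pd : (j + b * m = p + d)%nat by rewrite /p /d mulnBl; have := leq_mul2r m a b; lia.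
rewrite pd in Heq.
have win : forall i, (i <= m)%nat -> cnt z (p + i) d = cnt z p d.
  move=> i im.
  have e1 := cnt_add z p i d; have e2 := cnt_add z p d i.
  have e3 : cnt z (p + d) i = cnt z p i.
    apply: cnt_ext => l Hl; rewrite -Heq //; lia.
  rewrite addnC e2 e3 in e1; lia.
set tau := (INR (cnt z p d) - INR d * alpha)%R.
have tauE : (eps <= Rabs tau)%R.
  rewrite /tau /d; apply: dist; lia.
have Cb : forall q, (c <= cnt z q t <= c.+1)%nat.
  move=> q; have := Rabs_le_between (f1 q t) => -[h1 h2].
  apply/andP; split.
    rewrite -ltnS; apply/ltP; apply: INR_lt; rewrite S_INR; lra.
  rewrite -ltnS; apply/ltP; apply: INR_lt; rewrite !S_INR; lra.
have [i [iK Ci]] : exists i, (i < K)%nat /\ cnt z (p + i * t) t = c.+1.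
  apply: NNPP => Hn2.
  have allc : forall i, (i < K)%nat -> cnt z (p + i * t) t = c.
    move=> i iK; have := Cb (p + i * t)%nat; case/andP => h1 h2.
    apply/eqP; rewrite eqn_leq h1 andbT; rewrite leq_eqVlt in h2.
    case/orP: h2 => [/eqP E|]; last by rewrite ltnS.
    by exfalso; apply: Hn2; exists i.
  have cK : forall i, (i <= K)%nat -> cnt z p (i * t) = (i * c)%nat.
    elim=> [|i IH] iK; first by rewrite !mul0n /cnt.
    rewrite mulSnr cnt_add IH ?allc ?(ltnW iK) //; lia.
  have := f1 p (K * t)%nat; rewrite cK // => /Rabs_le_between [h1 h2].
  move: h1; rewrite !mult_INR => h1.
  have : (INR K * th <= 1)%R by rewrite /th; nra.
  lra.
set q := (p + i * t)%nat.
have g1 : (gfun z alpha (q + t) - gfun z alpha q = 1 - th)%R.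
  by rewrite gdiff Ci S_INR /th; ring.
have g2 : (gfun z alpha (q + d) - gfun z alpha q = tau)%R.
  rewrite gdiff /q win //; apply: (leq_trans _ Km); rewrite leq_mul2r; lia.
have g3 : (gfun z alpha (q + t + d) - gfun z alpha (q + t) = tau)%R.
  rewrite gdiff /q -addnA -mulSnr win //; apply: (leq_trans _ Km); rewrite leq_mul2r; lia.
have := Rabs_le_between (gF f1 (q + t + d) q).
have := Rabs_le_between (gF f1 (q + t) (q + d)).
move: tauE; rewrite /Rabs; case: Rcase_abs => ? ? ? ?; lra.
Qed.

Lemma cnt_negS z a L : (cnt (fun i => ~~ z i) a L + cnt z a L = L)%nat.
Proof.
elim: L => [|L IH] //; rewrite !cntS.
by move: IH; case: (z (a + L)) => /=; lia.
Qed.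

Lemma F1_neg z alpha : F1 z alpha -> F1 (fun i => ~~ z i) (1 - alpha).
Proof.
move=> f1 p L; have E := cnt_negS z p L.
have -> : cnt (fun i => ~~ z i) p L = (L - cnt z p L)%nat by lia.
rewrite minus_INR; last by apply/leP; exact: cnt_le.
have -> : (INR L - INR (cnt z p L) - INR L * (1 - alpha) =
           - (INR (cnt z p L) - INR L * alpha))%R by ring.
by rewrite Rabs_Ropp; apply: f1.
Qed.

Lemma block (T : eqType) (x : infword T) j k m i : (i < k)%nat ->
  take m (drop (i * m) (factor x j (k * m))) = factor x (j + i * m) m.
Proof.
move=> ik; rewrite /factor /mkseq -map_drop -map_take drop_iota take_iota add0n.
have -> : minn m (k * m - i * m) = m.
  apply/minn_idPl; rewrite -mulnBl; rewrite leq_pmull // subn_gt0 //.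
rewrite -[in iota (i * m) m](addn0 (i * m)) iotaDl -map_comp.
by apply: eq_map => l /=; rewrite addnA.
Qed.

Open Scope nat_scope.

Theorem corollary4p12 (T : eqType) (x : infword T) :
  sturmian x ->
  forall k : nat, 1 < k ->
  forall j : nat, exists n : nat, anti_power k (factor x j n).
Proof.
move=> st k k1 j.
have spx := sturm_SP st.
have bin : forall i1 i2 i3, x i1 = x i2 \/ x i2 = x i3 \/ x i1 = x i3.
  move=> i1 i2 i3; apply: NNPP => H.
  have n12 : x i1 != x i2 by apply/eqP => E; apply: H; left.
  have n23 : x i2 != x i3 by apply/eqP => E; apply: H; right; left.
  have n13 : x i1 != x i3 by apply/eqP => E; apply: H; right; right.
  have [sp1 _] := spx 1%nat.
  have : uniq (map (factor x ^~ 1%nat) [:: i1; i2; i3]).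
    by rewrite /= /factor /mkseq /= !addn0 !inE !eqseq_cons !andbT negb_or n12 n13 n23.
  by move/sp1.
pose z := fun i => x i == x 0%nat.
have zeq : forall i1 i2, x i1 = x i2 <-> z i1 = z i2.
  move=> i1 i2; rewrite /z; split => [->//|].
  case: (eqVneq (x i1) (x 0%nat)) => [E1|N1]; case: (eqVneq (x i2) (x 0%nat)) => [E2|N2] //=.
  - by rewrite E1 E2.
  - move=> _; case: (bin i1 i2 0%nat) => [//|[E|E]]; [by rewrite E eqxx in N2 | by rewrite E eqxx in N1].
have spz : SPw z := SP_transfer zeq spx.
have ap : aper z by move=> P d d0; apply: SP_aper spz P d d0.
have bal := balanced spz.
have [alpha f1] := slope bal.
have k0 : (2 <= INR k)%R by have := le_INR _ _ (leP k1); rewrite /=; lra.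
set eps := (/ (2 * INR k))%R.
have e0 : (0 < eps)%R by apply: Rinv_0_lt_compat; lra.
have [t [c [t0 ct Hd]]] := dirichlet f1 e0.
have ne := @irr z alpha ap bal f1 t c t0.
have [m [m0 Hm]] : exists m, (0 < m)%nat /\ forall j a b, (a < b < k)%nat ->
    exists2 i, (i < m)%nat & z (j + a * m + i) != z (j + b * m + i).
  have [h1 h2] := Rabs_lt_between Hd.
  case: (Rtotal_order (INR t * alpha) (INR c)) => [lt|[eq|gt]]; last first.
  - by apply: (@finalA z alpha k t c f1 k1 t0); split; rewrite -/eps; lra.
  - by exfalso; apply: ne.
  have f1' := F1_neg f1.
  have [m [m0 Hm]] : exists m, (0 < m)%nat /\ forall j a b, (a < b < k)%nat ->
      exists2 i, (i < m)%nat & ~~ z (j + a * m + i) != ~~ z (j + b * m + i).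
    apply: (@finalA (fun i => ~~ z i) (1 - alpha) k t (t - c) f1' k1 t0); rewrite minus_INR //; last by apply/leP.
    split; rewrite -/eps; lra.
  exists m; split => // j' a b Hab; have [i im Hi] := Hm j' a b Hab.
  by exists i => //; move: Hi; case: (z _); case: (z _).
exists (k * m)%nat, m; split => //; first by rewrite size_mkseq.
rewrite map_inj_in_uniq ?iota_uniq // => a b.
rewrite !mem_iota !add0n => /andP[_ ak] /andP[_ bk].
rewrite !block // => E.
have Hx : forall a' b', (a' < b' < k)%nat ->
    factor x (j + a' * m) m = factor x (j + b' * m) m -> False.
  move=> a' b' Hab E'.
  have [i im Hi] := Hm j a' b' Hab.
  have := (factor_eqP _ _ _ _).1 E' i im.
  by move/zeq => Ez; move: Hi; rewrite Ez eqxx.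
case: (ltngtP a b) => // ab.
- by exfalso; apply: (Hx a b) => //; rewrite ab bk.
- by exfalso; apply: (Hx b a) => //; rewrite ab ak.
Qed.
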